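(* Let $\mathbf{H}$ be a Heyting algebra with canonical frame $(X,\perp,Y,T)$. Then the lattice $\mathcal G(X)$ of stable sets of filters is a complete Heyting algebra and a canonical extension of $\mathbf H$, with $\mathbf H$ identified (via $a\mapsto X_a=\{x\in X:a\in x\}$) with the subalgebra $\mathrm{KO}\mathcal G(X)$ of compact-open stable sets. Its implication, the residual of intersection, is given by $A\Rightarrow C=\{u\in X:\forall z\in X\,(z\in A\text{ and }u\le z\text{ imply }z\in C)\}$, and this coincides with $A\Rightarrow_T C=\{u\in X:\forall x\in X\,\forall y\in Y\,(x\in A\text{ and }C\perp y\text{ imply }uT'xy)\}$.
   Context: The canonical frame of $\mathbf H$: $X$ is the set of filters of $\mathbf H$, $Y$ the set of ideals, $x\perp y$ iff $x\cap y\neq\emptyset$; for $x\in X,v\in Y$, $x\leadsto v$ is the ideal generated by $\{a\to b:a\in x,b\in v\}$, and $yTxv$ iff $x\leadsto v\subseteq y$. For $U\subseteq X$, $U'=\{y:\forall x\in U\ x\perp y\}$; for $V\subseteq Y$, ${}'V=\{x:\forall y\in V\ x\perp y\}$; $A\subseteq X$ is stable if $A={}'(A')$; $\mathcal G(X)$ is the complete lattice of stable sets (meet is intersection, join is closure of union). $u\le z$ on $X$ iff $\{u\}'\subseteq\{z\}'$ (i.e. $u\subseteq z$ as filters). $C\perp y$ means $c\perp y$ for all $c\in C$. $uT'xy$ iff $\forall v\in Y(vTxy\Rightarrow u\perp v)$. $X$ carries the topology generated by the basis $\{X_a:a\in H\}$; $\mathrm{KO}\mathcal G(X)$ is the set of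 stable sets compact and open in this topology. Canonical extension is in the sense of Gehrke–Harding. *)

(* Defs.v *)
From Stdlib Require Import List.
From mathcomp Require Import all_boot all_order.
Set Implicit Arguments. Unset Strict Implicit. Unset Printing Implicit Defensive.
Import Order.LTheory.
Local Open Scope order_scope.

Definition heyting_imp {d : Order.disp_t} {H : tbLatticeType d}
  (imp : H -> H -> H) : Prop :=
  forall a b c : H, (c <= imp a b) = (c `&` a <= b).

Section Frame.
Context {d : Order.disp_t} {H : tbLatticeType d} (imp : H -> H -> H).

(* filters (improper filter H included) and ideals (improper ideal included) *)
Definition is_filter (F : H -> Prop) : Prop :=
  (exists a, F a) /\ (forall a b, F a -> a <= b -> F b) /\
  (forall a b, F a -> F b -> F (a `&` b)).
Definition is_ideal (I : H -> Prop) : Prop :=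
  (exists a, I a) /\ (forall a b, I b -> a <= b -> I a) /\
  (forall a b, I a -> I b -> I (a `|` b)).

Record filt := Filt { fcar :> H -> Prop; fprop : is_filter fcar }.
Record idl := Idl { icar :> H -> Prop; iprop : is_ideal icar }.

(* X = filt, Y = idl *)
Definition perp (x : filt) (y : idl) : Prop := exists a, x a /\ y a.

Definition primeX (U : filt -> Prop) : idl -> Prop :=
  fun y => forall x, U x -> perp x y.
Definition primeY (V : idl -> Prop) : filt -> Prop :=
  fun x => forall y, V y -> perp x y.
Definition gclos (A : filt -> Prop) : filt -> Prop := primeY (primeX A).

Definition seteq {T} (A B : T -> Prop) : Prop := forall t, A t <-> B t.
Definition subs {T} (A B : T -> Prop) : Prop := forall t, A t -> B t.

Definition stable (A : filt -> Prop) : Prop := seteq A (gclos A).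

Definition bigjoinG (Fam : (filt -> Prop) -> Prop) : filt -> Prop :=
  gclos (fun x => exists A, Fam A /\ A x).
Definition bigmeetG (Fam : (filt -> Prop) -> Prop) : filt -> Prop :=
  fun x => forall A, Fam A -> A x.
Definition joinG (A B : filt -> Prop) : filt -> Prop :=
  gclos (fun x => A x \/ B x).

Definition Xa (a : H) : filt -> Prop := fun x => x a.

Definition leX (u z : filt) : Prop := forall y, perp u y -> perp z y.

Definition ideal_gen (S : H -> Prop) : H -> Prop :=
  fun c => forall I, is_ideal I -> subs S I -> I c.

Definition leadsto (x : filt) (v : idl) : H -> Prop :=
  ideal_gen (fun c => exists a b, x a /\ v b /\ c = imp a b).

Definition Trel (y : idl) (x : filt) (v : idl) : Prop := subs (leadsto x v) y.

Definition Tprime (u : filt) (x : filt) (y : idl) : Prop :=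
  forall v, Trel v x y -> perp u v.

Definition ImpG (A C : filt -> Prop) : filt -> Prop :=
  fun u => forall z, A z -> leX u z -> C z.

Definition ImpT (A C : filt -> Prop) : filt -> Prop :=
  fun u => forall x y, A x -> (forall c, C c -> perp c y) -> Tprime u x y.

Definition openX (U : filt -> Prop) : Prop :=
  forall x, U x -> exists a, x a /\ subs (Xa a) U.
Definition compactX (A : filt -> Prop) : Prop :=
  forall (I : Type) (U : I -> filt -> Prop), (forall i, openX (U i)) ->
    (forall x, A x -> exists i, U i x) ->
    exists s : seq I, forall x, A x -> exists2 i, List.In i s & U i x.
Definition KO (A : filt -> Prop) : Prop := stable A /\ compactX A /\ openX A.

(* Gehrke--Harding canonical extension conditions for e = Xa into G(X) *)
Definition dense_ext : Prop :=
  forall A, stable A ->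
    (exists Fam : (H -> Prop) -> Prop,
       seteq A (bigjoinG (fun B => exists S, Fam S /\
                                  seteq B (bigmeetG (fun D => exists a, S a /\ D = Xa a)))))
    /\
    (exists Fam : (H -> Prop) -> Prop,
       seteq A (bigmeetG (fun B => exists S, Fam S /\
                                  seteq B (bigjoinG (fun D => exists a, S a /\ D = Xa a))))).

Definition compact_ext : Prop :=
  forall S T : H -> Prop,
    subs (bigmeetG (fun D => exists a, S a /\ D = Xa a))
         (bigjoinG (fun D => exists a, T a /\ D = Xa a)) ->
    exists (s t : seq H), (forall a, List.In a s -> S a) /\
                          (forall a, List.In a t -> T a) /\
                          \meet_(a <- s) a <= \join_(b <- t) b.

End Frame.

(* Main.v *)
Require Import Defs.
From mathcomp Require Import all_boot all_order.
Set Implicit Arguments. Unset Strict Implicit. Unset Printing Implicit Defensive.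
Import Order.LTheory.
Local Open Scope order_scope.

Section S.
Context {d : Order.disp_t} {H : tbLatticeType d}.
Notation F := (@filt d H).
Notation I := (@idl d H).

Lemma f_up (x : F) a b : x a -> a <= b -> x b.
Proof. case: x => X [_ [hu _]] /=; exact: hu. Qed.
Lemma f_meet (x : F) a b : x a -> x b -> x (a `&` b).
Proof. case: x => X [_ [_ hm]] /=; exact: hm. Qed.
Lemma f_top (x : F) : x \top.
Proof. case: x => X [[a ha] [hu _]] /=; exact: (hu _ _ ha (lex1 a)). Qed.
Lemma i_down (y : I) a b : y b -> a <= b -> y a.
Proof. case: y => Y [_ [hd _]] /=; exact: hd. Qed.
Lemma i_join (y : I) a b : y a -> y b -> y (a `|` b).
Proof. case: y => Y [_ [_ hj]] /=; exact: hj. Qed.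
Lemma i_bot (y : I) : y \bot.
Proof. case: y => Y [[a ha] [hd _]] /=; exact: (hd _ _ ha (le0x a)). Qed.

Lemma upf_prop (a : H) : is_filter (fun c => a <= c).
Proof.
split; first by exists a.
split; first by move=> b c hb hbc; exact: le_trans hbc.
by move=> b c hb hc; rewrite lexI hb hc.
Qed.
Definition upf a : F := Filt (upf_prop a).

Lemma downi_prop (a : H) : is_ideal (fun c => c <= a).
Proof.
split; first by exists a.
split; first by move=> b c hb hbc; exact: le_trans hb.
by move=> b c hb hc; rewrite leUx hb hc.
Qed.
Definition downi a : I := Idl (downi_prop a).

Lemma fjoin_prop (w z : F) :
  is_filter (fun c => exists p q, w p /\ z q /\ p `&` q <= c).
Proof.
split; first by exists \top, \top, \top; split; [exact: f_top | split; [exact: f_top | exact: leIl]].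
split.
  move=> b c [p [q [hp [hq hb]]]] hbc; exists p, q; do 2!split => //.
  exact: le_trans hbc.
move=> b c [p [q [hp [hq hb]]]] [p' [q' [hp' [hq' hc]]]].
exists (p `&` p'), (q `&` q'); split; first exact: f_meet.
split; first exact: f_meet.
rewrite lexI; apply/andP; split.
  apply: le_trans hb; exact: leI2 (leIl _ _) (leIl _ _).
apply: le_trans hc; exact: leI2 (leIr _ _) (leIr _ _).
Qed.
Definition fjoin w z : F := Filt (fjoin_prop w z).
Lemma fjoin_l (w z : F) a : w a -> fjoin w z a.
Proof. by move=> h; exists a, \top; split => //; split; [exact: f_top | exact: leIl]. Qed.
Lemma fjoin_r (w z : F) a : z a -> fjoin w z a.
Proof. by move=> h; exists \top, a; split; [exact: f_top | split => //; exact: leIr]. Qed.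

Lemma genf_prop (S : H -> Prop) :
  is_filter (fun c => exists s : seq H, (forall a, List.In a s -> S a) /\ \meet_(a <- s) a <= c).
Proof.
split; first by exists \top, [::]; split => //; exact: lex1.
split.
  move=> b c [s [hs hb]] hbc; exists s; split => //; exact: le_trans hbc.
move=> b c [s [hs hb]] [t [ht hc]]; exists (s ++ t); split.
  by move=> a ha; case: (List.in_app_or _ _ _ ha) => [/hs|/ht].
by rewrite big_cat /=; exact: leI2.
Qed.
Definition genf S : F := Filt (genf_prop S).

Lemma geni_prop (T : H -> Prop) :
  is_ideal (fun c => exists s : seq H, (forall a, List.In a s -> T a) /\ c <= \join_(a <- s) a).
Proof.
split; first by exists \bot, [::]; split => //; exact: le0x.
split.
  move=> b c [s [hs hb]] hbc; exists s; split => //; exact: le_trans hb.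
move=> b c [s [hs hb]] [t [ht hc]]; exists (s ++ t); split.
  by move=> a ha; case: (List.in_app_or _ _ _ ha) => [/hs|/ht].
by rewrite big_cat /=; exact: leU2.
Qed.
Definition geni T : I := Idl (geni_prop T).

Lemma join_ge (T : Type) (f : T -> H) (s : seq T) i :
  List.In i s -> f i <= \join_(j <- s) f j.
Proof.
elim: s => //= j s IH [<-|hi]; rewrite big_cons; first exact: leUl.
apply: le_trans (IH hi) _; exact: leUr.
Qed.
Lemma i_bigjoin (y : I) (T : Type) (f : T -> H) (s : seq T) :
  (forall i, List.In i s -> y (f i)) -> y (\join_(j <- s) f j).
Proof.
elim: s => [|j s IH] h; first by rewrite big_nil; exact: i_bot.
rewrite big_cons; apply: i_join; first by apply: h; left.
by apply: IH => i hi; apply: h; right.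
Qed.

Lemma gclos_incl (A : F -> Prop) : subs A (gclos A).
Proof. by move=> x hx y hy; exact: hy. Qed.
Lemma gclos_mono (A B : F -> Prop) : subs A B -> subs (gclos A) (gclos B).
Proof. by move=> hAB x hx y hy; apply: hx => z hz; apply: hy; exact: hAB. Qed.
Lemma gclos_idem (A : F -> Prop) : subs (gclos (gclos A)) (gclos A).
Proof. by move=> x hx y hy; apply: hx => z hz; exact: hz. Qed.
Lemma stable_of (A : F -> Prop) : subs (gclos A) A -> stable A.
Proof. by move=> h x; split; [exact: gclos_incl | exact: h]. Qed.
Lemma gclos_least (A B : F -> Prop) : subs A B -> stable B -> subs (gclos A) B.
Proof. by move=> hAB hB x hx; apply/hB; exact: gclos_mono hx. Qed.
Lemma stable_up (A : F -> Prop) (x z : F) :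
  stable A -> A x -> (forall a, x a -> z a) -> A z.
Proof.
move=> hA hx hxz; apply/hA => y hy.
have [a [ha hya]] := hy x hx; exists a; split => //; exact: hxz.
Qed.
Lemma leX_iff (u z : F) : leX u z <-> (forall a, u a -> z a).
Proof.
split.
  move=> h a ha; have [c [hc hca]] := h (downi a) (ex_intro _ a (conj ha (le_refl a))).
  exact: f_up hc hca.
by move=> h y [a [ha hy]]; exists a; split => //; exact: h.
Qed.
Lemma Xa_stable a : stable (@Xa d H a).
Proof.
apply: stable_of => x hx.
have [c [hc hca]] := hx (downi a) (fun z hz => ex_intro _ a (conj hz (le_refl a))).
exact: f_up hc hca.
Qed.
Lemma openXa a : openX (@Xa d H a).
Proof. by move=> x hx; exists a; split. Qed.

End S.
Section T.
Context {d : Order.disp_t} {H : tbLatticeType d} (imp : H -> H -> H) (himp : heyting_imp imp).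
Notation F := (@filt d H).
Notation I := (@idl d H).

Lemma imp_mp a b : imp a b `&` a <= b.
Proof. by rewrite -himp. Qed.
Lemma imp_mono a1 a2 b1 b2 : imp a1 b1 <= imp (a1 `&` a2) (b1 `|` b2).
Proof.
rewrite himp; apply: le_trans (leUl b1 b2).
apply: le_trans (imp_mp a1 b1); rewrite lexI leIl /=.
apply: le_trans (leIr _ _) _; exact: leIl.
Qed.

Lemma leadi_prop (x : F) (y : I) :
  is_ideal (fun c => exists a b, x a /\ y b /\ c <= imp a b).
Proof.
split; first by exists (imp \top \bot), \top, \bot; split; [exact: f_top|split; [exact: i_bot|]].
split.
  move=> b c [a' [b' [ha [hb hc]]]] hbc; exists a', b'; do 2!split => //; exact: le_trans hc.
move=> b c [a1 [b1 [ha1 [hb1 h1]]]] [a2 [b2 [ha2 [hb2 h2]]]].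
exists (a1 `&` a2), (b1 `|` b2); split; first exact: f_meet.
split; first exact: i_join.
rewrite leUx; apply/andP; split.
  apply: le_trans h1 _; exact: imp_mono.
apply: le_trans h2 _; rewrite meetC joinC; exact: imp_mono.
Qed.
Definition leadi x y : I := Idl (leadi_prop x y).

Lemma leadsto_iff (x : F) (y : I) c : leadsto imp x y c <-> leadi x y c.
Proof.
split.
  move=> h; apply: (h (leadi x y)); first exact: iprop.
  by move=> e [a [b [ha [hb ->]]]]; exists a, b.
move=> [a [b [ha [hb hc]]]] J hJ hS.
case: hJ => _ [hd _]; apply: (hd _ (imp a b)) => //.
by apply: hS; exists a, b.
Qed.

Lemma perp_lead (u z : F) (y : I) p :
  (forall a, u a -> z a) -> u p -> leadi z y p -> perp z y.
Proof.
move=> huz hp [a [b [ha [hb hc]]]]; exists b; split => //.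
apply: (f_up (f_meet (huz _ hp) ha)); by rewrite -himp.
Qed.

Lemma key (A C : F -> Prop) (w z : F) (y : I) :
  stable A -> ImpG A C w -> A z -> (forall c, C c -> perp c y) ->
  perp w (leadi z y).
Proof.
move=> hA hw hz hy.
have hj : A (fjoin w z) by apply: stable_up hA hz _ => a; exact: fjoin_r.
have hC : C (fjoin w z) by apply: hw hj _; apply/leX_iff => a; exact: fjoin_l.
have [c [[p [q [hp [hq hpq]]]] hc]] := hy _ hC.
exists p; split => //; exists q, c; split => //; split => //; by rewrite himp.
Qed.

End T.
Section M.
Context {d : Order.disp_t} {H : tbLatticeType d} (imp : H -> H -> H) (himp : heyting_imp imp).
Notation F := (@filt d H).
Notation I := (@idl d H).

Lemma part1 (Fam : (F -> Prop) -> Prop) : (forall A, Fam A -> stable A) ->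
     stable (bigmeetG Fam) /\ stable (bigjoinG Fam) /\
     (forall A, Fam A -> subs A (bigjoinG Fam)) /\
     (forall B, stable B -> (forall A, Fam A -> subs A B) -> subs (bigjoinG Fam) B).
Proof.
move=> hF; split.
  apply: stable_of => x hx A hA; apply/(hF A hA).
  by apply: gclos_mono hx => z hz; exact: hz.
split; first by apply: stable_of; exact: gclos_idem.
split; first by move=> A hA x hx; apply: gclos_incl; exists A.
move=> B hB hAB; apply: gclos_least hB => x [A [hA hx]]; exact: hAB hA _ hx.
Qed.

Lemma part2 (A C : F -> Prop) : stable A -> stable C ->
     stable (ImpG A C) /\
     (forall B, stable B -> (subs (fun x => B x /\ A x) C <-> subs B (ImpG A C))) /\
     seteq (ImpG A C) (ImpT imp A C).
Proof.
move=> hA hC; split.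
  apply: stable_of => u hu z hz huz; apply/hC => y hy.
  have [p [hp hl]] := hu (leadi himp z y) (fun w hw => key himp hA hw hz hy).
  exact: perp_lead (proj1 (leX_iff u z) huz) hp hl.
split.
  move=> B hB; split.
    move=> h u hu z hz huz; apply: h; split => //.
    exact: stable_up hB hu (proj1 (leX_iff u z) huz).
  by move=> h x [hx hax]; apply: (h x hx x hax) => y.
move=> u; split.
  move=> hu x y hx hy v hv.
  have [p [hp hl]] := key himp hA hu hx hy.
  by exists p; split => //; apply: hv; apply/(leadsto_iff himp).
move=> hu z hz huz; apply/hC => y hy.
have [p [hp hl]] := hu z y hz hy (leadi himp z y) (fun c hc => proj1 (leadsto_iff himp z y c) hc).
exact: perp_lead (proj1 (leX_iff u z) huz) hp hl.
Qed.

Lemma KOXa (a : H) : KO (Xa a).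
Proof.
split; first exact: Xa_stable.
split; last exact: openXa.
move=> J U hU hcov.
have [i hi] := hcov (upf a) (le_refl a).
have [b [hb hsub]] := hU i _ hi.
exists [:: i] => x hx; exists i; first by left.
apply: hsub; exact: f_up hx hb.
Qed.

Lemma part5 (A : F -> Prop) : KO A -> exists a : H, seteq A (Xa a).
Proof.
move=> [hA [hc ho]].
pose J := {a : H | subs (Xa a) A}.
have [s hs] := hc J (fun i => Xa (sval i)) (fun i => @openXa _ _ (sval i))
  (fun x hx => let: ex_intro a (conj ha hsub) := ho x hx in ex_intro _ (exist _ a hsub) ha).
exists (\join_(i <- s) sval i) => x; split.
  move=> hx; have [i hi hxi] := hs x hx.
  exact: f_up hxi (join_ge _ hi).
move=> hx; apply/hA => y hy; exists (\join_(i <- s) sval i); split => //.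
apply: i_bigjoin => i _.
have [e [he hye]] := hy _ (proj2_sig i (upf (sval i)) (le_refl _)).
exact: i_down hye he.
Qed.

Lemma part7 (a b : H) : seteq (Xa (a `|` b)) (joinG (Xa a) (Xa b)).
Proof.
move=> x; split.
  move=> hx y hy; exists (a `|` b); split => //.
  apply: i_join.
    have [e [he hye]] := hy (upf a) (or_introl (le_refl a)); exact: i_down hye he.
  have [e [he hye]] := hy (upf b) (or_intror (le_refl b)); exact: i_down hye he.
apply: gclos_least (Xa_stable _) x => z [hz|hz]; apply: f_up hz _;
  [exact: leUl | exact: leUr].
Qed.

Lemma part10 (a b : H) : seteq (Xa (imp a b)) (ImpG (Xa a) (Xa b)).
Proof.
move=> u; split.
  move=> hu z hz huz; apply: (f_up (f_meet (proj1 (leX_iff u z) huz _ hu) hz)).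
  exact: (@imp_mp _ _ _ himp).
move=> hu.
have hz : Xa b (fjoin u (upf a)).
  apply: hu; first by rewrite /Xa; apply: fjoin_r; exact: le_refl.
  by apply/leX_iff => c; exact: fjoin_l.
case: hz => p [q [hp [hq hpq]]]; apply: f_up hp _; rewrite himp.
apply: le_trans hpq; exact: leI2 (le_refl p) hq.
Qed.

Lemma dense : @dense_ext d H.
Proof.
move=> A hA; split.
  exists (fun S => exists x : F, A x /\ S = fcar x) => x; split.
    move=> hx; apply: gclos_incl.
    exists (bigmeetG (fun D => exists a, x a /\ D = Xa a)); split.
      by exists (fcar x); split => //; exists x.
    by move=> D [a [ha ->]].
  move: x; apply: (gclos_least _ hA) => z [B [[S [[x0 [hx0 ->]] hB]] hz]].
  apply: stable_up hA hx0 _ => a ha.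
  exact: (proj1 (hB z) hz (Xa a) (ex_intro _ a (conj ha erefl))).
have Mst : forall y : I, stable (fun z : F => perp z y).
  by move=> y; apply: stable_of => z hz; apply: hz.
exists (fun S => exists y : I, primeX A y /\ S = icar y) => x; split.
  move=> hx B [S [[y [hy ->]] hB]]; apply/hB; apply: gclos_incl.
  have [c [hc hyc]] := hy x hx.
  by exists (Xa c); split => //; exists c.
move=> hx; apply/hA => y hy.
apply: (hx (fun z => perp z y)); exists (icar y); split; first by exists y.
move=> z; split.
  move=> [c [hc hyc]]; apply: gclos_incl; exists (Xa c); split => //; by exists c.
apply: gclos_least (Mst y) z => w [D [[a [ha ->]] hw]]; by exists a.
Qed.

Lemma compact : @compact_ext d H.
Proof.
move=> S T h.
have hg : bigjoinG (fun D => exists a, T a /\ D = Xa a) (genf S).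
  apply: h => D [a [ha ->]]; exists [:: a]; split; first by move=> e [<-|[]].
  by rewrite big_seq1.
have [c [[s [hs hsc]] [t [ht hct]]]] : perp (genf S) (geni T).
  apply: hg => z [D [[b [hb ->]] hz]]; exists b; split => //.
  exists [:: b]; split; first by move=> e [<-|[]].
  by rewrite big_seq1.
exists s, t; split => //; split => //; exact: le_trans hct.
Qed.

End M.
Theorem corollary4p6 (d : Order.disp_t) (H : tbLatticeType d)
  (imp : H -> H -> H) (himp : heyting_imp imp) :
  (* G(X) is a complete lattice: meets are intersections, joins closures of unions *)
  (forall Fam : (@filt d H -> Prop) -> Prop, (forall A, Fam A -> stable A) ->
     stable (bigmeetG Fam) /\ stable (bigjoinG Fam) /\
     (forall A, Fam A -> subs A (bigjoinG Fam)) /\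
     (forall B, stable B -> (forall A, Fam A -> subs A B) -> subs (bigjoinG Fam) B)) /\
  (* it is a Heyting algebra: ImpG is the residual of intersection,
     and it coincides with ImpT *)
  (forall A C : @filt d H -> Prop, stable A -> stable C ->
     stable (ImpG A C) /\
     (forall B, stable B -> (subs (fun x => B x /\ A x) C <-> subs B (ImpG A C))) /\
     seteq (ImpG A C) (ImpT imp A C)) /\
  (* a |-> X_a is a Heyting-algebra isomorphism of H onto KO G(X) *)
  (forall a : H, KO (Xa a)) /\
  (forall a b : H, subs (Xa a) (Xa b) <-> a <= b) /\
  (forall A : @filt d H -> Prop, KO A -> exists a : H, seteq A (Xa a)) /\
  (forall a b : H, seteq (Xa (a `&` b)) (fun x => Xa a x /\ Xa b x)) /\
  (forall a b : H, seteq (Xa (a `|` b)) (joinG (Xa a) (Xa b))) /\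
  seteq (Xa (\top : H)) (fun _ => True) /\
  seteq (Xa (\bot : H)) (gclos (fun _ => False)) /\
  (forall a b : H, seteq (Xa (imp a b)) (ImpG (Xa a) (Xa b))) /\
  (* canonical extension (Gehrke--Harding): dense and compact *)
  @dense_ext d H /\ @compact_ext d H.
Proof.
split; first exact: part1.
split; first by move=> A C; exact: part2.
split; first exact: KOXa.
split.
  move=> a b; split; first by move=> h; exact: (h (upf a) (le_refl a)).
  by move=> hab x hx; exact: f_up hx hab.
split; first exact: part5.
split.
  move=> a b x; split.
    by move=> hx; split; apply: f_up hx _; [exact: leIl | exact: leIr].
  by move=> [ha hb]; exact: f_meet.
split; first exact: part7.
split; first by move=> x; split => // _; exact: f_top.
split.
  move=> x; split.
    by move=> hx y _; exists \bot; split => //; exact: i_bot.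
  move=> hx; have [c [hc hcb]] := hx (downi \bot) (fun _ f => False_ind _ f).
  exact: f_up hc hcb.
split; first exact: part10.
split; [exact: dense | exact: compact].
Qed.
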